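(* Let $F_2$ be the free group on $x,y$ and let $w(x,y)=x^{a_1}y^{b_1}x^{a_2}y^{b_2}\cdots x^{a_k}y^{b_k}$ with $k\ge 1$ and all integers $a_i\neq 0$, $b_i\neq 0$. If all $b_i$ are positive, then either the word map $w:\mathrm{SL}(2,\mathbb{C})^2\to\mathrm{SL}(2,\mathbb{C})$ is surjective, or $w=v^2$ for some word $v\neq \mathrm{id}$ in $F_2$.
   Context: The word map $w:\mathrm{SL}(2,\mathbb{C})^2\to \mathrm{SL}(2,\mathbb{C})$ sends $(X,Y)$ to $X^{a_1}Y^{b_1}\cdots X^{a_k}Y^{b_k}$. *)

(* Defs.v *)
From HB Require Import structures.
From mathcomp Require Import all_boot all_order all_algebra.
From mathcomp Require Import complex.
From mathcomp Require Import reals Rstruct.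
Set Implicit Arguments. Unset Strict Implicit. Unset Printing Implicit Defensive.
Import Order.TTheory GRing.Theory Num.Theory.
Local Open Scope ring_scope.

Definition C : Type := (Rdefinitions.R)[i].
Definition Cfield : fieldType := C.

Definition M2 := 'M[C]_2.
Definition inSL2 (X : 'M[C]_2) : Prop := \det X = 1.

(* The word w = x^{a_1} y^{b_1} ... x^{a_k} y^{b_k} is encoded by the list
   ab = [:: (a_1,b_1); ...; (a_k,b_k)] of integer exponent pairs. *)
Definition word_map (ab : seq (int * int)) (X Y : 'M[C]_2) : 'M[C]_2 :=
  \prod_(p <- ab) (X ^ p.1 * Y ^ p.2).

Definition word_map_surjective (ab : seq (int * int)) : Prop :=
  forall Z : 'M[C]_2, inSL2 Z ->
    exists X Y : 'M[C]_2, [/\ inSL2 X, inSL2 Y & word_map ab X Y = Z].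

(* The free group F_2 on x, y: elements are words in the letters
   x, x^-1, y, y^-1, two words being equal in F_2 iff they have the same
   free reduction.  A letter is (g, e) with g = false for x, true for y,
   and e = true for an inverse letter. *)
Definition letter := (bool * bool)%type.
Definition inv_letter (l : letter) : letter := (l.1, ~~ l.2).

Fixpoint freduce (s : seq letter) : seq letter :=
  match s with
  | [::] => [::]
  | l :: s' =>
      match freduce s' with
      | l' :: r => if l' == inv_letter l then r else l :: l' :: r
      | [::] => [:: l]
      end
  end.

Definition F2_eq (u v : seq letter) : Prop := freduce u = freduce v.

Definition gen_pow (g : bool) (a : int) : seq letter :=
  nseq `|a|%N (g, a < 0).

Definition word_of (ab : seq (int * int)) : seq letter :=
  flatten [seq gen_pow false p.1 ++ gen_pow true p.2 | p <- ab].

(* Main.v *)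
Require Import Defs.
From mathcomp Require Import all_boot all_order all_algebra all_field complex ring zify.
From mathcomp Require Import reals Rstruct.
From Stdlib Require Import Classical.
Set Implicit Arguments. Unset Strict Implicit. Unset Printing Implicit Defensive.
Import Order.TTheory GRing.Theory Num.Theory.
Local Open Scope ring_scope.

Definition mk2 (a b c d : C) : 'M[C]_2 :=
  \matrix_(i < 2, j < 2) if (i : nat) == 0%N then (if (j : nat) == 0%N then a else b)
                         else (if (j : nat) == 0%N then c else d).

Lemma mk2E (M : 'M[C]_2) : M = mk2 (M ord0 ord0) (M ord0 ord_max) (M ord_max ord0) (M ord_max ord_max).
Proof.
apply/matrixP => i j; rewrite mxE.
case: i => [[|[|i]] Hi]; case: j => [[|[|j]] Hj] //=; congr (M _ _); exact: val_inj.
Qed.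

Lemma mul2 (a b c d e f g h : C) :
  mk2 a b c d * mk2 e f g h = mk2 (a*e+b*g) (a*f+b*h) (c*e+d*g) (c*f+d*h).
Proof.
rewrite -mulmxE; apply/matrixP => i j; rewrite !mxE !big_ord_recr big_ord0 /= !mxE /=.
by case: i => [[|[|i]] Hi]; case: j => [[|[|j]] Hj] //=; rewrite add0r.
Qed.

Lemma one2 : (1 : 'M[C]_2) = mk2 1 0 0 1.
Proof.
apply/matrixP => i j; rewrite !mxE.
by case: i => [[|[|i]] Hi]; case: j => [[|[|j]] Hj].
Qed.

Lemma det2 (a b c d : C) : \det (mk2 a b c d) = a * d - b * c.
Proof.
rewrite (expand_det_row _ ord0) !big_ord_recr big_ord0 /= /cofactor !det_mx11 !mxE /=.
rewrite add0r !expr0 /= !mul1r.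
by rewrite add0n expr1 mulN1r mulrN.
Qed.

Lemma mk2_inj (a b c d a2 b2 c2 d2 : C) : mk2 a b c d = mk2 a2 b2 c2 d2 ->
  [/\ a = a2, b = b2, c = c2 & d = d2].
Proof.
move=> /matrixP H.
have := H ord0 ord0; have := H ord0 ord_max; have := H ord_max ord0; have := H ord_max ord_max.
by rewrite !mxE /= => -> -> -> ->.
Qed.

Lemma detM2 (A B : 'M[C]_2) : \det (A * B) = \det A * \det B.
Proof. by rewrite -mulmxE det_mulmx. Qed.

Lemma det12 : \det (1 : 'M[C]_2) = 1.
Proof. exact: det1. Qed.

Lemma unit_det (M : 'M[C]_2) : \det M != 0 -> M \is a GRing.unit.
Proof. by move=> H; change (M \in unitmx); rewrite unitmxE unitfE. Qed.

Lemma inv_of (M N : 'M[C]_2) : M * N = 1 -> M^-1 = N.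
Proof.
move=> H.
have Hd : \det M * \det N = 1 by rewrite -detM2 H det12.
have HM : M \is a GRing.unit.
  apply: unit_det; apply/eqP => E; move: Hd; rewrite E mul0r => /eqP; by rewrite eq_sym oner_eq0.
by rewrite -[N](mulKr HM) H mulr1.
Qed.

Lemma powU (n : nat) (e : C) : mk2 1 e 0 1 ^+ n = mk2 1 (n%:R * e) 0 1.
Proof.
elim: n => [|n IH]; first by rewrite expr0 one2 mul0r.
rewrite exprS IH mul2; congr mk2; rewrite ?mulrS; ring.
Qed.

Lemma powUz (z : int) (e : C) : mk2 1 e 0 1 ^ z = mk2 1 (z%:~R * e) 0 1.
Proof.
case: z => n; first by rewrite -exprnP powU.
rewrite /exprz powU; apply: inv_of; rewrite mul2 one2 NegzE; congr mk2; rewrite ?rmorphN /=; ring.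
Qed.

Lemma powD (n : nat) (u v : C) : mk2 u 0 0 v ^+ n = mk2 (u ^+ n) 0 0 (v ^+ n).
Proof.
elim: n => [|n IH]; first by rewrite !expr0 one2.
rewrite exprS IH mul2 !exprS; congr mk2; ring.
Qed.

Lemma powT (n : nat) (u e : C) :
  mk2 u e 0 u ^+ n = mk2 (u ^+ n) (n%:R * u ^+ n.-1 * e) 0 (u ^+ n).
Proof.
elim: n => [|n IH]; first by rewrite !expr0 one2 mul0r mul0r.
rewrite exprS IH mul2 !exprS; congr mk2; try ring.
case: n {IH} => [|n] /=; first by rewrite expr0; ring.
rewrite exprS; ring.
Qed.


Fixpoint Bs (ab : seq (int * int)) : nat :=
  if ab is p :: r then (`|p.2| + Bs r)%N else 0%N.
Fixpoint Ps (ab : seq (int * int)) : {poly C} :=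
  if ab is p :: r then (p.1)%:~R%:P + 'X^(`|p.2|) * Ps r else 0.

Lemma Bs_cat l1 l2 : Bs (l1 ++ l2) = (Bs l1 + Bs l2)%N.
Proof. by elim: l1 => //= p l IH; rewrite IH addnA. Qed.

Lemma Ps_cat l1 l2 : Ps (l1 ++ l2) = Ps l1 + 'X^(Bs l1) * Ps l2.
Proof.
elim: l1 => [|p l IH] /=; first by rewrite add0r expr0 mul1r.
by rewrite IH mulrDr addrA mulrA -exprD.
Qed.

Lemma coef_Ps_cons p r i :
  (Ps (p :: r))`_i = (if i == 0%N then p.1%:~R else 0) +
                      (if (i < `|p.2|)%N then 0 else (Ps r)`_(i - `|p.2|)).
Proof. rewrite [Ps _]/= coefD coefC coefXnM. reflexivity. Qed.
Lemma size_Ps ab : (forall p, p \in ab -> 0 < p.2) -> (size (Ps ab) <= Bs ab)%N.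
Proof.
elim: ab => [|p r IH] Hb; first by rewrite /= size_poly0.
apply/leq_sizeP => j; rewrite [Bs _]/= => Hj.
have Hp : (0 < `|p.2|)%N by rewrite absz_gt0 gt_eqF // Hb // mem_head.
rewrite coef_Ps_cons.
have Hj0 : (j == 0%N) = false.
  apply/negbTE; rewrite -lt0n; apply: leq_trans Hj; exact: leq_trans Hp (leq_addr _ _).
rewrite Hj0 add0r ifF; last by apply/negbTE; rewrite -leqNgt; exact: leq_trans (leq_addr _ _) Hj.
have Hr : forall q, q \in r -> 0 < q.2 by move=> q Hq; apply: Hb; rewrite in_cons Hq orbT.
apply: (leq_sizeP _ _ (IH Hr)); lia.
Qed.
Lemma coef0_Ps p r : (0 < p.2) -> (Ps (p :: r))`_0 = p.1%:~R.
Proof.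
move=> Hp; rewrite coef_Ps_cons eqxx ifT ?addr0 //.
by rewrite absz_gt0 gt_eqF.
Qed.

Lemma split_Ps ab e : (Ps ab)`_e != 0 -> exists l1 l2, ab = l1 ++ l2 /\ Bs l1 = e.
Proof.
elim: ab e => [|p r IH] e; first by rewrite /= coef0 eqxx.
case: e => [|e] H; first by exists [::], (p :: r).
move: H; rewrite coef_Ps_cons /= add0r.
case: ifP => [_|Hlt]; first by rewrite eqxx.
move=> /IH [l1 [l2 [-> Hl]]]; exists (p :: l1), l2; split => //=.
rewrite Hl; move/negbT: Hlt; lia.
Qed.
Definition goodl (l : seq (int * int)) := forall p, p \in l -> p.1 != 0 /\ 0 < p.2.

Lemma goodl_cons p r : goodl (p :: r) -> [/\ p.1 != 0, 0 < p.2 & goodl r].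
Proof.
move=> H; have [H1 H2] := H p (mem_head _ _); split => // q Hq.
by apply: H; rewrite in_cons Hq orbT.
Qed.

Lemma Ps_nz0 p r : goodl (p :: r) -> (Ps (p :: r))`_0 != 0.
Proof.
by case/goodl_cons => H1 H2 _; rewrite coef0_Ps // intr_eq0.
Qed.

Lemma abs_pos (z : int) : 0 < z -> (0 < `|z|)%N.
Proof. by move=> Hz; rewrite absz_gt0 gt_eqF. Qed.

Lemma Ps_inj l1 l2 : goodl l1 -> goodl l2 -> Bs l1 = Bs l2 -> Ps l1 = Ps l2 -> l1 = l2.
Proof.
elim: l1 l2 => [|p r IH] [|q r'] //.
- move=> _ /goodl_cons [_ Hq _] /= HB; have := abs_pos Hq; lia.
- move=> /goodl_cons [_ Hp _] _ /= HB; have := abs_pos Hp; lia.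
move=> G1 G2 HB HP.
have G1' := G1; have G2' := G2.
move/goodl_cons: G1 => [Hp1 Hp2 Gr]; move/goodl_cons: G2 => [Hq1 Hq2 Gr'].
have Hbp := abs_pos Hp2; have Hbq := abs_pos Hq2.
have E1 : p.1 = q.1.
  have := congr1 (fun P : {poly C} => P`_0) HP; rewrite !coef0_Ps //; exact: intr_inj.
have key : forall i, (0 < i)%N ->
   (if (i < `|p.2|)%N then 0 else (Ps r)`_(i - `|p.2|)) =
   (if (i < `|q.2|)%N then 0 else (Ps r')`_(i - `|q.2|)).
  move=> i Hi; have := congr1 (fun P : {poly C} => P`_i) HP; rewrite !coef_Ps_cons.
  have Hi0 : (i == 0%N) = false by case: i Hi.
  by rewrite Hi0 !add0r.
have Eb : `|p.2|%N = `|q.2|%N.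
  case: r Gr IH HB key {HP G1'} => [|p0 r0] Gr IH HB key; case: r' Gr' HB key {G2'} => [|q0 r0'] Gr' HB key.
  - move: HB => /=; lia.
  - have := key _ Hbq; rewrite ltnn subnn [Ps [::]]/= coef0 if_same.
    by move=> /esym/eqP; rewrite (negbTE (Ps_nz0 Gr')).
  - have := key _ Hbp; rewrite ltnn subnn [Ps [::]]/= coef0 if_same.
    by move=> /eqP; rewrite (negbTE (Ps_nz0 Gr)).
  - case: (ltngtP `|p.2| `|q.2|) => // H.
    + have := key _ Hbp; rewrite ltnn subnn H.
      by move=> /eqP; rewrite (negbTE (Ps_nz0 Gr)).
    + have := key _ Hbq; rewrite ltnn subnn H.
      by move=> /esym/eqP; rewrite (negbTE (Ps_nz0 Gr')).
have Er : r = r'.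
  apply: IH => //; first by move: HB => /=; rewrite Eb; lia.
  apply/polyP => i; have := key (i + `|p.2|)%N.
  rewrite -Eb addnK ifF; last by apply/negbTE; rewrite -leqNgt leq_addl.
  by rewrite ifF ?leq_addl /=; [apply; lia | apply/negbTE; rewrite -leqNgt leq_addl].
rewrite Er; congr (_ :: _); case: p q E1 Eb Hp2 Hq2 {G1' G2' key Hbp Hbq Hp1 Hq1 HP HB} => [a b] [c d] /= -> Eb Hb Hd.
by rewrite -(gtz0_abs Hb) -(gtz0_abs Hd) Eb.
Qed.

Lemma roots_m (m : nat) : (0 < m)%N ->
  exists rs : seq C, [/\ uniq rs, size rs = m & forall z, z \in rs -> z ^+ m = -1].
Proof.
move=> Hm.
pose q : {poly C} := 'X^m + 1%:P.
have [rs Hq] := closed_field_poly_normal q.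
rewrite lead_coefXnaddC // scale1r in Hq.
exists rs; split.
- rewrite -separable_prod_XsubC -Hq unlock /separable_poly.
  apply/Bezout_eq1_coprimepP.
  exists (1, - (m%:R^-1)%:P * 'X).
  rewrite /q derivD derivC addr0 derivXn mul1r.
  rewrite /=.
  have -> : (- (m%:R^-1)%:P * 'X) * ('X^(m.-1) *+ m) = - 'X^m :> {poly C}.
    rewrite -(mulr_natl ('X^(m.-1) : {poly C})) -polyC_natr !mulNr; apply: (congr1 -%R).
    rewrite mulrACA -polyCM mulVf ?pnatr_eq0 -?lt0n // mul1r -exprS prednK //.
  by rewrite addrAC subrr add0r.
- have := size_XnaddC (1 : C) Hm; rewrite -/q Hq size_prod_XsubC.
  by case.
- move=> z Hz; have : root q z by rewrite Hq root_prod_XsubC.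
  rewrite /root /q !hornerE => /eqP H.
  by apply/eqP; rewrite -addr_eq0 H.
Qed.

Lemma goodl_catl l1 l2 : goodl (l1 ++ l2) -> goodl l1.
Proof. by move=> H p Hp; apply: H; rewrite mem_cat Hp. Qed.
Lemma goodl_catr l1 l2 : goodl (l1 ++ l2) -> goodl l2.
Proof. by move=> H p Hp; apply: H; rewrite mem_cat Hp orbT. Qed.
Lemma goodl_pos l : goodl l -> forall p, p \in l -> 0 < p.2.
Proof. by move=> H p /H []. Qed.

Lemma square_of ab m : (0 < m)%N -> goodl ab -> Bs ab = (m + m)%N ->
  (forall z, z ^+ m = -1 -> (Ps ab).[z] = 0) -> exists l, ab = l ++ l.
Proof.
move=> Hm G HB Hz.
have [rs [Hu Hs Hr]] := roots_m Hm.
have zero_of : forall p : {poly C}, (size p <= m)%N ->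
    (forall z, z \in rs -> p.[z] = 0) -> p = 0.
  move=> p Hp Hp0; apply/eqP; apply: contraT => Hn.
  have : all (root p) rs by apply/allP => z Hzr; apply/rootP; exact: Hp0.
  by move=> /(max_poly_roots Hn) /(_ Hu); rewrite Hs ltnNge Hp.
have HP := size_Ps (goodl_pos G); rewrite HB in HP.
have eTD : take_poly m (Ps ab) = drop_poly m (Ps ab).
  apply/eqP; rewrite -subr_eq0; apply/eqP; apply: zero_of.
    apply/leq_sizeP => j Hj; rewrite coefB coef_take_poly coef_drop_poly ltnNge Hj /= sub0r.
    by rewrite (leq_sizeP _ _ HP) ?oppr0 //; lia.
  move=> z Hzr; have := Hz z (Hr z Hzr).
  rewrite -{1}(poly_take_drop m (Ps ab)) !hornerE Hr //.
  by rewrite mulrN1 => ->.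
have coefm : (Ps ab)`_m != 0.
  have := congr1 (fun P : {poly C} => P`_0) eTD.
  rewrite coef_take_poly coef_drop_poly Hm add0n => <-.
  case: ab G HB {Hz HP eTD} => [|p r] G HB; first by move: HB => /=; lia.
  exact: Ps_nz0.
have [l1 [l2 [Eab Hl1]]] := split_Ps coefm.
have Gc : goodl (l1 ++ l2) by rewrite -Eab.
have G1 := goodl_catl Gc; have G2 := goodl_catr Gc.
have Hl2 : Bs l2 = m by move: HB; rewrite Eab Bs_cat Hl1; lia.
have E : Ps l1 = Ps l2.
  apply/eqP; rewrite -subr_eq0; apply/eqP; apply: zero_of.
    apply/leq_sizeP => j Hj; rewrite coefB.
    have S1 := size_Ps (goodl_pos G1); have S2 := size_Ps (goodl_pos G2).
    rewrite (leq_sizeP _ _ S1) ?(leq_sizeP _ _ S2) ?subr0 //; lia.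
  move=> z Hzr; have := Hz z (Hr z Hzr).
  rewrite Eab Ps_cat Hl1 !hornerE Hr //.
  by rewrite mulN1r => ->.
exists l1; rewrite Eab; congr (_ ++ _); apply/esym/Ps_inj => //; by rewrite Hl1 Hl2.
Qed.




Definition lc (l : letter) : int := if l.1 then (if l.2 then -1 else 1) else 0.
Definition ycnt (s : seq letter) : int := \sum_(x <- s) lc x.

Lemma ycnt_cons x s : ycnt (x :: s) = lc x + ycnt s.
Proof. by rewrite /ycnt big_cons. Qed.

Lemma ycnt_freduce s : ycnt (freduce s) = ycnt s.
Proof.
elim: s => [|l s IH] //=.
case E: (freduce s) IH => [|l' r] IH.
  by rewrite !ycnt_cons -IH.
case: ifP => [/eqP El|_]; last by rewrite !ycnt_cons -IH ycnt_cons.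
rewrite ycnt_cons -IH ycnt_cons El addrA.
by case: l {E El} => [[] []]; rewrite /lc /= ?addNr ?addrN ?add0r.
Qed.

Lemma ycnt_word l : (forall p, p \in l -> 0 < p.2) -> ycnt (word_of l) = (Bs l)%:Z.
Proof.
elim: l => [|p r IH] H; first by rewrite /ycnt big_nil.
rewrite /word_of /= -/(word_of r) /ycnt !big_cat /= -/(ycnt (word_of r)) IH; last first.
  by move=> q Hq; apply: H; rewrite in_cons Hq orbT.
rewrite /gen_pow !big_nseq /lc /= !iter_addr mul0rn !addr0 add0r.
have Hp := H p (mem_head _ _).
rewrite ltNge (ltW Hp) /= PoszD; congr (_ + _); exact: natz.
Qed.

Lemma F2_part l : (forall p, p \in l -> 0 < p.2) -> (0 < Bs l)%N ->
  ~ F2_eq (word_of l) [::] /\ F2_eq (word_of (l ++ l)) (word_of l ++ word_of l).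
Proof.
move=> H HB; split; last by rewrite /F2_eq /word_of map_cat flatten_cat.
rewrite /F2_eq /= => E.
have := ycnt_freduce (word_of l); rewrite E ycnt_word // /ycnt big_nil => /eqP.
by rewrite eq_sym; move: HB; case: (Bs l).
Qed.

Lemma conj_pow (g X : 'M[C]_2) (z : int) : g \is a GRing.unit -> X \is a GRing.unit ->
  (g * X * g^-1) ^ z = g * X ^ z * g^-1.
Proof.
move=> Hg HX.
have Hn : forall n : nat, (g * X * g^-1) ^+ n = g * X ^+ n * g^-1.
  elim => [|n IH]; first by rewrite !expr0 mulr1 divrr.
  by rewrite exprS IH exprS !mulrA (mulrVK Hg).
case: z => n; first by rewrite -!exprnP Hn.
rewrite /exprz Hn; apply: inv_of.
have HA : X ^+ n.+1 \is a GRing.unit by rewrite unitrX.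
by rewrite !mulrA (mulrVK Hg) (mulrK HA) divrr.
Qed.

Lemma wm_nil (X Y : 'M[C]_2) : word_map [::] X Y = 1.
Proof. by rewrite /word_map big_nil. Qed.
Lemma wm_cons p r (X Y : 'M[C]_2) : word_map (p :: r) X Y = X ^ p.1 * Y ^ p.2 * word_map r X Y.
Proof. by rewrite /word_map big_cons. Qed.

Lemma word_conj ab (g X Y : 'M[C]_2) : g \is a GRing.unit -> X \is a GRing.unit ->
  Y \is a GRing.unit ->
  word_map ab (g * X * g^-1) (g * Y * g^-1) = g * word_map ab X Y * g^-1.
Proof.
move=> Hg HX HY.
elim: ab => [|p r IH]; first by rewrite !wm_nil mulr1 divrr.
by rewrite !wm_cons IH !conj_pow // !mulrA !(mulrVK Hg).
Qed.

Definition reach ab (Z : 'M[C]_2) :=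
  exists X Y : 'M[C]_2, [/\ inSL2 X, inSL2 Y & word_map ab X Y = Z].

Lemma SL2_unit (X : 'M[C]_2) : inSL2 X -> X \is a GRing.unit.
Proof. by rewrite /inSL2 => H; apply: unit_det; rewrite H oner_eq0. Qed.

Lemma reach_conj ab (g T : 'M[C]_2) : g \is a GRing.unit -> reach ab T ->
  reach ab (g * T * g^-1).
Proof.
move=> Hg [X [Y [HX HY HW]]].
have Hd : forall A : 'M[C]_2, \det (g * A * g^-1) = \det A.
  by move=> A; rewrite !detM2 mulrAC -detM2 divrr // det12 mul1r.
exists (g * X * g^-1), (g * Y * g^-1); split; rewrite /inSL2 ?Hd //.
by rewrite word_conj // ?SL2_unit // HW.
Qed.

Lemma nth_root (n : nat) (u : C) : (0 < n)%N -> exists v : C, v ^+ n = u.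
Proof.
move=> Hn.
have : size ('X^n - u%:P : {poly C}) != 1%N by rewrite size_XnsubC //; case: n Hn.
move=> /closed_rootP [v]; rewrite /root !hornerE subr_eq0 => /eqP Hv.
by exists v.
Qed.

Lemma pos_abs (z : int) : 0 < z -> z = (`|z|%N)%:Z.
Proof. by move=> H; rewrite gez0_abs // ltW. Qed.

Lemma Bs_cons p r : Bs (p :: r) = (`|p.2| + Bs r)%N. Proof. by []. Qed.
Lemma Ps_cons p r : Ps (p :: r) = (p.1)%:~R%:P + 'X^(`|p.2|) * Ps r. Proof. by []. Qed.

Lemma powY (Y : 'M[C]_2) (z : int) : 0 < z -> Y ^ z = Y ^+ `|z|%N.
Proof. by move=> H; rewrite {1}(pos_abs H). Qed.

Lemma word_one ab (Y : 'M[C]_2) : (forall p, p \in ab -> 0 < p.2) ->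
  word_map ab 1 Y = Y ^+ Bs ab.
Proof.
elim: ab => [|p r IH] H; first by rewrite wm_nil expr0.
rewrite wm_cons exp1rz mul1r powY ?H ?mem_head // IH; last first.
  by move=> q Hq; apply: H; rewrite in_cons Hq orbT.
by rewrite -exprD.
Qed.

Lemma word_UD ab (nu : C) : nu != 0 -> (forall p, p \in ab -> 0 < p.2) ->
  word_map ab (mk2 1 1 0 1) (mk2 nu 0 0 nu^-1) =
  mk2 (nu ^+ Bs ab) ((nu ^+ Bs ab)^-1 * (Ps ab).[nu ^+ 2]) 0 ((nu ^+ Bs ab)^-1).
Proof.
move=> Hnu.
elim: ab => [|p r IH] H.
  by rewrite wm_nil /= expr0 invr1 horner0 mulr0 one2.
rewrite wm_cons powUz powY ?H ?mem_head // powD IH; last first.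
  by move=> q Hq; apply: H; rewrite in_cons Hq orbT.
rewrite Bs_cons Ps_cons !hornerE exprD !exprVn !mul2 -exprAC.
have H1 : nu ^+ `|p.2| != 0 by rewrite expf_neq0.
have H2 : nu ^+ Bs r != 0 by rewrite expf_neq0.
congr mk2; field; by rewrite ?H1 ?H2.
Qed.

Lemma eq_via (x y e k : C) : e = 0 -> x - y = k * e -> x = y.
Proof. by move=> He; rewrite He mulr0 => /eqP; rewrite subr_eq0 => /eqP. Qed.

Lemma eq_via2 (x y e1 e2 k1 k2 : C) : e1 = 0 -> e2 = 0 -> x - y = k1 * e1 + k2 * e2 -> x = y.
Proof. by move=> H1 H2; rewrite H1 H2 !mulr0 addr0 => /eqP; rewrite subr_eq0 => /eqP. Qed.

Lemma det_one : inSL2 1. Proof. exact: det12. Qed.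

Lemma reach_diag ab : (0 < Bs ab)%N -> (forall p, p \in ab -> 0 < p.2) ->
  forall u : C, u != 0 -> reach ab (mk2 u 0 0 u^-1).
Proof.
move=> HB Hb u Hu.
have [v Hv] := nth_root u HB.
have Hv0 : v != 0 by apply: contraNneq Hu => E; rewrite -Hv E expr0n; case: (Bs ab) HB.
exists 1, (mk2 v 0 0 v^-1); split; first exact: det_one.
  by rewrite /inSL2 det2 mulfV // mulr0 subr0.
by rewrite word_one // powD exprVn Hv.
Qed.

Lemma reach_scale ab (u c1 c : C) : c1 != 0 -> c != 0 ->
  reach ab (mk2 u c1 0 u) -> reach ab (mk2 u c 0 u).
Proof.
move=> H1 H0 HR.
pose g := mk2 (c / c1) 0 0 1.
have Hg : g \is a GRing.unit.
  by apply: unit_det; rewrite det2 mulr1 mulr0 subr0 mulf_neq0 ?invr_eq0.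
have Hgi : g^-1 = mk2 (c1 / c) 0 0 1.
  apply: inv_of; rewrite mul2 one2; congr mk2; field; by rewrite ?H1 ?H0.
have H := reach_conj Hg HR; rewrite Hgi !mul2 in H.
apply: (eq_rect _ (reach ab) H); congr mk2; field; by rewrite ?H1 ?H0.
Qed.

Lemma reach_shear ab (u v c : C) : u != v ->
  reach ab (mk2 u 0 0 v) -> reach ab (mk2 u c 0 v).
Proof.
move=> Huv HR.
have Hd : v - u != 0 by rewrite subr_eq0 eq_sym.
pose x := c / (v - u).
pose g := mk2 1 x 0 1.
have Hg : g \is a GRing.unit.
  by apply: unit_det; rewrite det2 mulr1 mulr0 subr0 oner_eq0.
have Hgi : g^-1 = mk2 1 (- x) 0 1.
  apply: inv_of; rewrite mul2 one2; congr mk2; ring.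
have H := reach_conj Hg HR; rewrite Hgi !mul2 in H.
apply: (eq_rect _ (reach ab) H); congr mk2; rewrite /x; field; by rewrite ?Hd.
Qed.

Lemma reach_tri ab : (0 < Bs ab)%N -> (forall p, p \in ab -> 0 < p.2) ->
  (exists c, c != 0 /\ reach ab (mk2 (-1) c 0 (-1))) ->
  forall u c v : C, u * v = 1 -> reach ab (mk2 u c 0 v).
Proof.
move=> HB Hb [c1 [Hc1 Hneg]] u c v Huv.
have Hu : u != 0 by apply: contra_eq_neq Huv => ->; rewrite mul0r eq_sym oner_eq0.
have Hv : v = u^-1 by rewrite -[v]mul1r -(mulVf Hu) -mulrA Huv mulr1.
have Hd := reach_diag HB Hb Hu; rewrite -Hv in Hd.
case: (eqVneq u v) => [Euv|Nuv]; last exact: reach_shear.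
rewrite -Euv in Huv *.
case: (eqVneq c 0) => [->|Hc]; first by move: Hd; rewrite -Euv.
have : (u - 1) * (u + 1) = 0 by rewrite mulrDr mulr1 !mulrBl Huv mul1r; ring.
move/eqP; rewrite mulf_eq0 subr_eq0 => /orP [/eqP->|]; last first.
  by rewrite addr_eq0 => /eqP ->; exact: reach_scale Hneg.
have HBn : (Bs ab)%:R != 0 :> C by rewrite pnatr_eq0 -lt0n.
apply: (reach_scale (c1 := (Bs ab)%:R)) => //.
exists 1, (mk2 1 1 0 1); split; first exact: det_one.
  by rewrite /inSL2 det2 mulr1 mulr0 subr0.
by rewrite word_one // powU mulr1.
Qed.

Lemma reach_all ab : (0 < Bs ab)%N -> (forall p, p \in ab -> 0 < p.2) ->
  (exists c, c != 0 /\ reach ab (mk2 (-1) c 0 (-1))) ->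
  forall Z, inSL2 Z -> reach ab Z.
Proof.
move=> HB Hb Hneg Z; rewrite (mk2E Z).
move: (Z ord0 ord0) (Z ord0 ord_max) (Z ord_max ord0) (Z ord_max ord_max) => p q r s.
rewrite /inSL2 det2 => Hdet.
case: (eqVneq r 0) => [Hr|Hr].
  by rewrite Hr; apply: (reach_tri HB Hb Hneg); move: Hdet; rewrite Hr mulr0 subr0.
have [d Hd] := @nth_root 2 ((p + s) ^+ 2 - 4) isT.
have H2 : (2 : C) != 0 by rewrite pnatr_eq0.
pose mu := (p + s + d) / 2.
have Emu : mu ^+ 2 - (p + s) * mu + 1 = 0.
  apply: (eq_via (e := d ^+ 2 - ((p + s) ^+ 2 - 4)) (k := 4^-1)); first by rewrite Hd subrr.
  rewrite /mu; field.
  done.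
have Edet : p * s - q * r - 1 = 0 by rewrite Hdet subrr.
pose g := mk2 (mu - s) 1 r 0.
have Hg : g \is a GRing.unit.
  by apply: unit_det; rewrite det2 mulr0 mul1r sub0r oppr_eq0.
have EZ : mk2 p q r s * g = g * mk2 mu 1 0 (p + s - mu).
  rewrite !mul2; congr mk2.
  - by apply: (eq_via2 (k1 := -1) (k2 := -1) Emu Edet); ring.
  - ring.
  - ring.
  - ring.
have -> : mk2 p q r s = g * mk2 mu 1 0 (p + s - mu) * g^-1.
  by rewrite -EZ (mulrK Hg).
apply: reach_conj => //; apply: reach_tri => //.
by apply: (eq_via (k := -1) Emu); ring.
Qed.

Unset Implicit Arguments.

Theorem corollary1p4 (ab : seq (int * int)) :
  (0 < size ab)%N ->
  (forall p, p \in ab -> p.1 != 0) ->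
  (forall p, p \in ab -> 0 < p.2) ->
  word_map_surjective ab \/
  exists v : seq letter, ~ F2_eq v [::] /\ F2_eq (word_of ab) (v ++ v).
Proof.
move=> Hs Ha Hb.
have G : goodl ab by move=> p Hp; split; [exact: Ha | exact: Hb].
have HB : (0 < Bs ab)%N.
  case: ab Hs G {Ha Hb} => // p r _ G; rewrite Bs_cons.
  by rewrite addn_gt0 abs_pos //; exact: (proj2 (G p (mem_head _ _))).
have surj : (exists c, c != 0 /\ reach ab (mk2 (-1) c 0 (-1))) -> word_map_surjective ab.
  by move=> Hneg Z HZ; exact: reach_all.
case Hodd: (odd (Bs ab)).
  left; apply: surj; exists (Bs ab)%:R; split; first by rewrite pnatr_eq0 -lt0n.
  exists 1, (mk2 (-1) 1 0 (-1)); split; first exact: det_one.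
    by rewrite /inSL2 det2 mulr0 subr0 mulrNN mulr1.
  have E1 : (-1) ^+ (Bs ab) = -1 :> C by rewrite -signr_odd Hodd expr1.
  have E2 : (-1) ^+ (Bs ab).-1 = 1 :> C.
    rewrite -signr_odd; move: HB Hodd; case: (Bs ab) => // n _.
    by rewrite oddS => /negbTE ->; rewrite expr0.
  by rewrite word_one // powT E1 E2 !mulr1.
have Hev : Bs ab = ((Bs ab)./2 + (Bs ab)./2)%N.
  by rewrite addnn -[LHS]odd_double_half Hodd add0n.
set m := (Bs ab)./2 in Hev.
have Hm : (0 < m)%N by move: HB; rewrite Hev; lia.
case: (classic (exists w : C, w ^+ m = -1 /\ (Ps ab).[w] != 0)) => [[w [Hw HP]]|Hno].
  left; apply: surj.
  have [nu Hnu] := @nth_root 2 w isT.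
  have Hw0 : w != 0.
    apply/eqP => E; move: Hw; rewrite E expr0n; move: Hm; rewrite lt0n => /negbTE ->; rewrite mulr0n.
    by move=> /esym/eqP; rewrite oppr_eq0 oner_eq0.
  have Hnu0 : nu != 0 by apply: contra_neq Hw0 => E; rewrite -Hnu E expr0n.
  exists (- (Ps ab).[w]); split; first by rewrite oppr_eq0.
  exists (mk2 1 1 0 1), (mk2 nu 0 0 nu^-1); split.
  - by rewrite /inSL2 det2 mulr1 mulr0 subr0.
  - by rewrite /inSL2 det2 mulfV // mulr0 subr0.
  rewrite word_UD // Hnu Hev addnn -mul2n exprM Hnu Hw invrN1 mulN1r.
  done.
right.
have Hz : forall z, z ^+ m = -1 -> (Ps ab).[z] = 0.
  move=> z Hz; apply/eqP; apply/negPn/negP => H; apply: Hno; by exists z.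
have [l El] := square_of Hm G Hev Hz.
have Gl : goodl l by apply: (goodl_catl (l2 := l)); rewrite -El.
have Hl : (0 < Bs l)%N by move: HB; rewrite El Bs_cat; lia.
have [H1 H2] := F2_part (goodl_pos Gl) Hl.
by exists (word_of l); rewrite El.
Qed.
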